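(* Let $G_1,G_2$ be ordered graphs, and let $L_1,L_2$ be the lengths of the longest monotone paths in $G_1,G_2$ respectively. Then the length of the longest monotone path in the lexicographic product $G_1\otimes G_2$ is exactly $L_1L_2$.
   Context: An ordered graph is a finite graph with a linear order on its vertex set. A path $v_1,\dots,v_L$ in an ordered graph is monotone if $v_1<v_2<\dots<v_L$ in the order; its length is its number of vertices. The lexicographic product $G_1\otimes G_2$ is the ordered graph on vertex set $V(G_2)\times V(G_1)$, ordered lexicographically with the $G_2$-coordinate compared first, in which $(u,x)$ and $(w,y)$ are adjacent if and only if either $u\neq w$ and $uw\in E(G_2)$, or $u=w$ and $xy\in E(G_1)$. (Equivalently: each vertex of $G_2$ is blown up into an interval of $|G_1|$ vertices, edges of $G_2$ become complete bipartite graphs between blowup sets, and a copy of $G_1$ is placed in each blowup set.) *)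

(* Defs.v *)
From mathcomp Require Import all_boot.
Set Implicit Arguments. Unset Strict Implicit. Unset Printing Implicit Defensive.

(* An ordered graph on the vertex set {0, ..., nv - 1}, ordered by the usual
   order of nat.  [adj] is the adjacency relation; only its values on
   vertices (numbers < nv) matter. *)
Record ograph := OGraph { nv : nat; adj : nat -> nat -> bool }.

Definition is_ograph (G : ograph) : Prop :=
  forall x y, x < nv G -> y < nv G ->
    adj G x y = adj G y x /\ ~~ adj G x x.

(* A monotone path v_1 < v_2 < ... < v_L with v_i v_{i+1} edges;
   its length is the number of vertices (size of the sequence). *)
Definition mono_path (G : ograph) (s : seq nat) : bool :=
  all (fun v => v < nv G) s &&
  sorted (fun x y => (x < y) && adj G x y) s.

Definition longest_mono_path (G : ograph) (L : nat) : Prop :=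
  (exists2 s, mono_path G s & size s = L) /\
  (forall s, mono_path G s -> size s <= L).

(* Lexicographic product G1 ⊗ G2: vertex (u, x) with u in V(G2), x in V(G1)
   is encoded as u * nv G1 + x, so the lexicographic order (G2-coordinate
   first) is exactly the order of nat. *)
Definition lexprod (G1 G2 : ograph) : ograph :=
  OGraph (nv G2 * nv G1)
    (fun i j =>
       let u := i %/ nv G1 in let x := i %% nv G1 in
       let w := j %/ nv G1 in let y := j %% nv G1 in
       ((u != w) && adj G2 u w) || ((u == w) && adj G1 x y)).

(* Main.v *)
Require Import Defs.
From mathcomp Require Import all_boot zify.

Lemma mono_cons2 G x y s : Defs.mono_path G (x :: y :: s) =
  [&& x < nv G, x < y, adj G x y & Defs.mono_path G (y :: s)].
Proof.
rewrite /Defs.mono_path /=.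
by case: (x < nv G); case: (y < nv G); case: (all (fun v => v < nv G) s); case: (x < y); case: (adj G x y); case: (path _ y s).
Qed.

Lemma mono1 G x : Defs.mono_path G [:: x] = (x < nv G).
Proof. by rewrite /Defs.mono_path /= !andbT. Qed.

Lemma mono_head G x s : Defs.mono_path G (x :: s) -> x < nv G.
Proof. by case: s => [|y s]; rewrite ?mono1 ?mono_cons2 // => /andP[]. Qed.

Lemma upper G1 G2 L1 (H1 : forall s, Defs.mono_path G1 s -> size s <= L1) x s :
  Defs.mono_path (lexprod G1 G2) (x :: s) ->
  exists t r, [/\ Defs.mono_path G2 (x %/ nv G1 :: t), Defs.mono_path G1 (x %% nv G1 :: r)
     & size s <= L1 * size t + size r].
Proof.
have hn : forall z, z < nv (lexprod G1 G2) -> 0 < nv G1 /\ z %/ nv G1 < nv G2.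
  move=> z /= hz; case: (posnP (nv G1)) => [e|p].
    by move: hz; rewrite e muln0.
  by split => //; rewrite ltn_divLR.
elim: s x => [|y s IH] x.
  move=> /mono_head /hn [p q]; exists [::], [::].
  by rewrite !mono1 q ltn_mod p.
rewrite mono_cons2 => /and4P [hx hxy hadj hm].
have [t [r [ht hr hs]]] := IH _ hm.
have [p q] := hn _ hx.
move: hadj; rewrite /= => hadj.
have hle : x %/ nv G1 <= y %/ nv G1 by apply: leq_div2r; apply: ltnW.
case: eqP hadj => [e|ne] /= hadj.
  exists t, (y %% nv G1 :: r); split.
  - by rewrite e.
  - rewrite mono_cons2 hr ltn_mod p hadj andbT /=.
    rewrite andbT; move: hxy.
    by rewrite {1}(divn_eq x (nv G1)) {1}(divn_eq y (nv G1)) e ltn_add2l.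
  - by rewrite /=; lia.
rewrite orbF in hadj.
exists (y %/ nv G1 :: t), [::]; split.
- rewrite mono_cons2 ht hadj q andbT /= ltn_neqAle hle andbT.
  by rewrite andbT; apply/eqP.
- by rewrite mono1 ltn_mod.
- have := H1 _ hr; rewrite /= => hr1. rewrite /= addn0 mulnS. lia.
Qed.

Lemma vb n1 n2 u a : u < n2 -> a < n1 -> u * n1 + a < n2 * n1.
Proof.
move=> hu ha; apply: (@leq_trans (u.+1 * n1)).
  by rewrite mulSn [n1 + _]addnC ltn_add2l.
by rewrite leq_mul2r hu orbT.
Qed.

Lemma divE n1 u a : a < n1 -> (u * n1 + a) %/ n1 = u /\ (u * n1 + a) %% n1 = a.
Proof.
move=> ha; have p : 0 < n1 by apply: leq_ltn_trans ha.
by rewrite divnMDl // divn_small // addn0 modnMDl modn_small.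
Qed.

Definition blk n1 u (q : seq nat) := map (fun x => u * n1 + x) q.

Lemma blockP G1 G2 u q0 q rest : u < nv G2 ->
  Defs.mono_path G1 (q0 :: q) ->
  Defs.mono_path (lexprod G1 G2) rest ->
  (forall h r', rest = h :: r' -> forall a, a < nv G1 ->
      (u * nv G1 + a < h) && adj (lexprod G1 G2) (u * nv G1 + a) h) ->
  Defs.mono_path (lexprod G1 G2) (blk (nv G1) u (q0 :: q) ++ rest).
Proof.
move=> hu; elim: q q0 => [|q1 q IH] q0 hq hr hc /=.
  have ha := @mono_head _ _ _ hq.
  case: rest hr hc => [|h r'] hr hc.
    by rewrite mono1 /= vb.
  rewrite mono_cons2 hr andbT /= vb //=.
  by have := hc _ _ erefl _ ha.
move: hq; rewrite mono_cons2 => /and4P [h0 h01 hadj hq].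
rewrite mono_cons2 IH // andbT /= vb //= ltn_add2l h01 /=.
have h1 := @mono_head _ _ _ hq.
have [d0 m0] := @divE _ u _ h0.
have [d1 m1] := @divE _ u _ h1.
by rewrite d0 d1 m0 m1 eqxx hadj orbT.
Qed.

Lemma lower G1 G2 u0 p q0 q : Defs.mono_path G2 (u0 :: p) -> Defs.mono_path G1 (q0 :: q) ->
  Defs.mono_path (lexprod G1 G2) (flatten (map (fun u => blk (nv G1) u (q0 :: q)) (u0 :: p))).
Proof.
move=> + hq; elim: p u0 => [|u1 p IH] u0 hp.
  change (Defs.mono_path (lexprod G1 G2) (blk (nv G1) u0 (q0::q) ++ [::])).
  apply: blockP => //; first exact: @mono_head _ _ _ hp.
move: hp; rewrite mono_cons2 => /and4P [h0 h01 hadj hp].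
change (Defs.mono_path (lexprod G1 G2) (blk (nv G1) u0 (q0::q) ++
   flatten (map (fun u => blk (nv G1) u (q0 :: q)) (u1 :: p)))).
apply: blockP => //.
  exact: IH.
move=> h r' [<- _] a ha.
have hq0 := @mono_head _ _ _ hq.
have [d0 m0] := @divE _ u0 _ ha.
have [d1 m1] := @divE _ u1 _ hq0.
rewrite /= d0 d1 (ltn_eqF h01) /= hadj /=.
rewrite andbT; apply: (@leq_trans (u0.+1 * nv G1)).
  by rewrite mulSn [nv G1 + _]addnC ltn_add2l.
by apply: leq_trans (leq_addr _ _); rewrite leq_mul2r h01 orbT.
Qed.

Lemma size_blk n1 q (p : seq nat) :
  size (flatten (map (fun u => blk n1 u q) p)) = size q * size p.
Proof.
elim: p => [|u p IH] /=; first by rewrite muln0.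
by rewrite size_cat size_map IH mulnS.
Qed.

Theorem proposition3p2 (G1 G2 : ograph) (L1 L2 : nat) :
  is_ograph G1 -> is_ograph G2 ->
  longest_mono_path G1 L1 -> longest_mono_path G2 L2 ->
  longest_mono_path (lexprod G1 G2) (L1 * L2).
Proof.
move=> _ _ [[q hq <-] H1] [[p hp <-] H2]; split.
  case: q hq H1 => [|q0 q] hq H1.
    exists [::]; first by [].
    by rewrite mul0n.
  case: p hp H2 => [|u0 p] hp H2.
    exists [::]; first by [].
    by rewrite muln0.
  exists (flatten (map (fun u => blk (nv G1) u (q0 :: q)) (u0 :: p))).
    exact: lower.
  exact: size_blk.
case=> [|x s] hs; first by [].
have [t [r [ht hr hsz]]] := @upper _ _ _ H1 _ _ hs.
have h2 := H2 _ ht; have h1 := H1 _ hr.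
move: h1 h2 hsz; rewrite /= => h1 h2 hsz.
apply: (@leq_trans (size q * (size t).+1)).
  rewrite mulnS; apply: leq_trans (_ : (size r).+1 + size q * size t <= _).
    by rewrite addSn ltnS addnC.
  by rewrite leq_add2r.
by rewrite leq_mul2l h2 orbT.
Qed.
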